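(* Let $(S,g_1^0,g_2^0,g_3^0,D_1,D_2,D_3,\xi)\in\mathrm{MC}_{\mathrm{pre}}$ satisfy $g_1^0>0$, $g_2^0<0$, $g_3^0<0$ and $c_{23}^1\neq0$ everywhere on $S$. Then there exist unique $A,B\in C^\infty(S,\mathbb{R})$ with $A,B>0$ and a unique $\sigma\in\{-1,+1\}$ such that the transformed tuple $$\big(S,\,Ag_1^0,\,Ag_2^0,\,Ag_3^0,\,\sigma AB^{g_2^0+g_3^0}D_1,\,\sigma AB^{g_3^0+g_1^0}D_2,\,\sigma AB^{g_1^0+g_2^0}D_3,\,\xi+\log A+(g_1^0+g_2^0+g_3^0)\log B\big)$$ lies in $\mathrm{MC}_{\mathrm{normal}}$. (The resulting partial map $\mathcal{N}:\mathrm{MC}_{\mathrm{pre}}\nrightarrow\mathrm{MC}_{\mathrm{normal}}$ is called normalization.)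
   Context: ''Cyclic $(i,j,k)$'' means $(i,j,k)\in\{(1,2,3),(2,3,1),(3,1,2)\}$. Let $S$ be a smooth manifold diffeomorphic to $\mathbb{R}^3$ and $D_1,D_2,D_3$ a frame of vector fields on $S$; its structure functions $c_{jk}^i\in C^\infty(S,\mathbb{R})$ are defined by $[D_j,D_k]=\sum_{i=1}^3c_{jk}^iD_i$. $\mathrm{MC}_{\mathrm{pre}}$ is the set of tuples $(S,g_1^0,g_2^0,g_3^0,D_1,D_2,D_3,\xi)$ with $g_i^0,\xi\in C^\infty(S,\mathbb{R})$ satisfying (E1) $0=g_2^0g_3^0+g_3^0g_1^0+g_1^0g_2^0$, and (E2) $0=D_i(g_j^0+g_k^0)+c_{ij}^j(g_i^0-g_j^0)+c_{ik}^k(g_i^0-g_k^0)-2D_i(\xi)g_i^0$ for all cyclic $(i,j,k)$. $\mathrm{MC}_{\mathrm{normal}}\subset\mathrm{MC}_{\mathrm{pre}}$ consists of the tuples with $(g_1^0,g_2^0,g_3^0)=\tfrac12(1,-1-u,-1-\tfrac1u)$ for some $u\in C^\infty(S,\mathbb{R})$ with $u>0$, and with $c_{23}^1=-2$. Here $B^f$ means $e^{f\log B}$. *)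

(* Defs.v *)
(* classical reals. S is modelled as R^3. *)
From Stdlib Require Import Reals ClassicalEpsilon.
Open Scope R_scope.

Inductive idx := I1 | I2 | I3.

Definition next (i : idx) : idx :=
  match i with I1 => I2 | I2 => I3 | I3 => I1 end.

Definition sum3 (F : idx -> R) : R := F I1 + F I2 + F I3.

Definition pt := (R * R * R)%type.

Definition coord (p : pt) (a : idx) : R :=
  match p with (x, y, z) => match a with I1 => x | I2 => y | I3 => z end end.

Definition upd (p : pt) (a : idx) (t : R) : pt :=
  match p with (x, y, z) =>
    match a with I1 => (t, y, z) | I2 => (x, t, z) | I3 => (x, y, t) end end.

(* Partial derivative d f / d x_a (chosen value; meaningful where it exists). *)
Definition pd (f : pt -> R) (a : idx) : pt -> R :=
  fun p => epsilon (inhabits 0)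
    (fun l => derivable_pt_lim (fun t => f (upd p a t)) (coord p a) l).

Fixpoint ipd (l : list idx) (f : pt -> R) : pt -> R :=
  match l with nil => f | cons a l' => ipd l' (pd f a) end.

Definition cont3 (f : pt -> R) : Prop :=
  forall p eps, eps > 0 -> exists d, d > 0 /\
    forall q, (forall a, Rabs (coord q a - coord p a) < d) -> Rabs (f q - f p) < eps.

Definition smooth (f : pt -> R) : Prop :=
  forall l : list idx, cont3 (ipd l f) /\
    forall a p, exists d, derivable_pt_lim (fun t => ipd l f (upd p a t)) (coord p a) d.

(* A vector field X = sum_a X a * d/dx_a *)
Definition VF := idx -> pt -> R.

Definition vapp (X : VF) (f : pt -> R) : pt -> R :=
  fun p => sum3 (fun a => X a p * pd f a p).

Definition bracket (X Y : VF) : VF :=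
  fun a p => vapp X (Y a) p - vapp Y (X a) p.

Definition frame (D : idx -> VF) : Prop :=
  (forall i a, smooth (D i a)) /\
  forall p (l : idx -> R),
    (forall a, sum3 (fun i => l i * D i a p) = 0) -> forall i, l i = 0.

(* c i j k = c_{jk}^i : [D_j, D_k] = sum_i c_{jk}^i D_i *)
Definition structure_fns (D : idx -> VF) (c : idx -> idx -> idx -> pt -> R) : Prop :=
  forall j k a p, bracket (D j) (D k) a p = sum3 (fun i => c i j k p * D i a p).

Definition MC_pre (g : idx -> pt -> R) (D : idx -> VF) (xi : pt -> R) : Prop :=
  frame D /\ (forall i, smooth (g i)) /\ smooth xi /\
  (forall p, 0 = g I2 p * g I3 p + g I3 p * g I1 p + g I1 p * g I2 p) /\
  exists c, structure_fns D c /\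
    forall i p, let j := next i in let k := next (next i) in
      0 = vapp (D i) (fun q => g j q + g k q) p
          + c j i j p * (g i p - g j p)
          + c k i k p * (g i p - g k p)
          - 2 * vapp (D i) xi p * g i p.

Definition MC_normal (g : idx -> pt -> R) (D : idx -> VF) (xi : pt -> R) : Prop :=
  MC_pre g D xi /\
  (exists u : pt -> R, smooth u /\ (forall p, u p > 0) /\
     forall p, g I1 p = / 2 * 1 /\ g I2 p = / 2 * (- 1 - u p)
               /\ g I3 p = / 2 * (- 1 - / u p)) /\
  forall c, structure_fns D c -> forall p, c I1 I2 I3 p = -2.

Definition rpow (B f : R) : R := exp (f * ln B).

Definition tr_g (A : pt -> R) (g : idx -> pt -> R) : idx -> pt -> R :=
  fun i p => A p * g i p.

Definition tr_D (A B : pt -> R) (s : R) (g : idx -> pt -> R) (D : idx -> VF)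
  : idx -> VF :=
  fun i a p => s * A p * rpow (B p) (g (next i) p + g (next (next i)) p) * D i a p.

Definition tr_xi (A B : pt -> R) (g : idx -> pt -> R) (xi : pt -> R) : pt -> R :=
  fun p => xi p + ln (A p) + (g I1 p + g I2 p + g I3 p) * ln (B p).

(* Main.v *)
Require Import Defs.
From Stdlib Require Import Reals.
From Stdlib Require Import Lra Lia ClassicalEpsilon FunctionalExtensionality Classical List.
Open Scope R_scope.

Definition dlim (f : pt -> R) a p l := derivable_pt_lim (fun t => f (upd p a t)) (coord p a) l.
Definition dable (f : pt -> R) := forall a p, exists l, dlim f a p l.

Lemma pd_eq f a p l : dlim f a p l -> pd f a p = l.
Proof.
  intro H. unfold pd. 
  apply (uniqueness_limite (fun t => f (upd p a t)) (coord p a)); [|exact H].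
  apply (epsilon_spec (A:=R) (inhabits 0) (fun l => derivable_pt_lim (fun t => f (upd p a t)) (coord p a) l)).
  exists l; exact H.
Qed.

Lemma dable_pd f a p : dable f -> dlim f a p (pd f a p).
Proof. intro H. destruct (H a p) as [l Hl]. rewrite (pd_eq _ _ _ _ Hl). exact Hl. Qed.

Lemma dlim_plus f g a p l1 l2 : dlim f a p l1 -> dlim g a p l2 ->
  dlim (fun q => f q + g q) a p (l1 + l2).
Proof. intros H1 H2. exact (derivable_pt_lim_plus _ _ _ _ _ H1 H2). Qed.

Lemma dlim_mult f g a p l1 l2 : dlim f a p l1 -> dlim g a p l2 ->
  dlim (fun q => f q * g q) a p (l1 * g p + f p * l2).
Proof.
  intros H1 H2. unfold dlim.
  assert (E: forall h : pt -> R, h (upd p a (coord p a)) = h p).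
  { intro h. f_equal. destruct p as [[x y] z]; destruct a; reflexivity. }
  rewrite <- (E g), <- (E f).
  exact (derivable_pt_lim_mult _ _ _ _ _ H1 H2).
Qed.

Lemma dlim_const c a p : dlim (fun _ => c) a p 0.
Proof. exact (derivable_pt_lim_const c _). Qed.

Lemma dlim_comp (phi : R -> R) f a p l1 l2 : dlim f a p l1 ->
  derivable_pt_lim phi (f p) l2 -> dlim (fun q => phi (f q)) a p (l2 * l1).
Proof.
  intros H1 H2. unfold dlim.
  assert (E: forall h : pt -> R, h (upd p a (coord p a)) = h p).
  { intro h. f_equal. destruct p as [[x y] z]; destruct a; reflexivity. }
  rewrite <- E in H2.
  exact (derivable_pt_lim_comp _ _ _ _ _ H1 H2).
Qed.

Lemma deriv_inv x : x <> 0 -> derivable_pt_lim Rinv x (- (/ x * / x)).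
Proof.
  intro Hx.
  assert (H := derivable_pt_lim_div (fct_cte 1) id x 0 1 (derivable_pt_lim_const 1 x) (derivable_pt_lim_id x) Hx).
  assert (E : (fct_cte 1 / id)%F = Rinv).
  { apply functional_extensionality; intro y. unfold div_fct, fct_cte, id. unfold Rdiv; ring. }
  rewrite E in H.
  replace (- (/ x * / x)) with ((0 * id x - 1 * fct_cte 1 x) / (id x)²); [exact H|].
  unfold id, fct_cte, Rsqr. field. exact Hx.
Qed.

Lemma pd_plus f g a : dable f -> dable g ->
  pd (fun q => f q + g q) a = fun q => pd f a q + pd g a q.
Proof.
  intros Hf Hg. apply functional_extensionality; intro q.
  apply pd_eq. apply dlim_plus; apply dable_pd; assumption.
Qed.

Lemma pd_mult f g a : dable f -> dable g ->
  pd (fun q => f q * g q) a = fun q => pd f a q * g q + f q * pd g a q.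
Proof.
  intros Hf Hg. apply functional_extensionality; intro q.
  apply pd_eq. apply dlim_mult; apply dable_pd; assumption.
Qed.

Lemma pd_const c a : pd (fun _ => c) a = fun _ => 0.
Proof. apply functional_extensionality; intro q. apply pd_eq. apply dlim_const. Qed.

Lemma pd_comp (phi phi' : R -> R) f a : dable f ->
  (forall q, derivable_pt_lim phi (f q) (phi' (f q))) ->
  pd (fun q => phi (f q)) a = fun q => phi' (f q) * pd f a q.
Proof.
  intros Hf Hp. apply functional_extensionality; intro q.
  apply pd_eq. apply dlim_comp; [apply dable_pd; assumption| apply Hp].
Qed.

Lemma dable_plus f g : dable f -> dable g -> dable (fun q => f q + g q).
Proof. intros Hf Hg a p. eexists. apply dlim_plus; apply dable_pd; assumption. Qed.
Lemma dable_mult f g : dable f -> dable g -> dable (fun q => f q * g q).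
Proof. intros Hf Hg a p. eexists. apply dlim_mult; apply dable_pd; assumption. Qed.
Lemma dable_const c : dable (fun _ => c).
Proof. intros a p. eexists. apply dlim_const. Qed.
Lemma dable_comp (phi : R -> R) f : dable f ->
  (forall q, exists l, derivable_pt_lim phi (f q) l) -> dable (fun q => phi (f q)).
Proof.
  intros Hf Hp a p. destruct (Hp p) as [l Hl]. eexists.
  apply dlim_comp; [apply dable_pd; assumption| exact Hl].
Qed.

Lemma cont3_const c : cont3 (fun _ => c).
Proof. intros p eps He. exists 1. split; [lra|]. intros. rewrite Rminus_diag, Rabs_R0. lra. Qed.

Lemma cont3_plus f g : cont3 f -> cont3 g -> cont3 (fun q => f q + g q).
Proof.
  intros Hf Hg p eps He.
  destruct (Hf p (eps/2)) as [d1 [Hd1 H1]]; [lra|].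
  destruct (Hg p (eps/2)) as [d2 [Hd2 H2]]; [lra|].
  exists (Rmin d1 d2). split; [apply Rmin_pos; assumption|].
  intros q Hq.
  assert (A1 := H1 q (fun a => Rlt_le_trans _ _ _ (Hq a) (Rmin_l _ _))).
  assert (A2 := H2 q (fun a => Rlt_le_trans _ _ _ (Hq a) (Rmin_r _ _))).
  replace (f q + g q - (f p + g p)) with ((f q - f p) + (g q - g p)) by ring.
  eapply Rle_lt_trans; [apply Rabs_triang|]. lra.
Qed.

Lemma cont3_comp (phi : R -> R) f : cont3 f ->
  (forall q, exists l, derivable_pt_lim phi (f q) l) -> cont3 (fun q => phi (f q)).
Proof.
  intros Hf Hp p eps He.
  destruct (Hp p) as [l Hl].
  assert (Hc : continuity_pt phi (f p)) by (apply derivable_continuous_pt; exists l; exact Hl).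
  destruct (Hc eps He) as [alp [Ha Hc2]].
  destruct (Hf p alp Ha) as [d [Hd Hd2]].
  exists d. split; [exact Hd|]. intros q Hq.
  destruct (Req_dec (f q) (f p)) as [E|E].
  - rewrite E, Rminus_diag, Rabs_R0. exact He.
  - apply (Hc2 (f q)). split.
    + split; [exact I| intro E'; apply E; symmetry; exact E'].
    + apply Hd2. exact Hq.
Qed.

Lemma cont3_mult f g : cont3 f -> cont3 g -> cont3 (fun q => f q * g q).
Proof.
  intros Hf Hg.
  assert (Dsq : forall x, exists l, derivable_pt_lim (fun x => x * x) x l).
  { intro x. eexists. apply (derivable_pt_lim_mult id id). apply derivable_pt_lim_id. apply derivable_pt_lim_id. }
  assert (Dopp : forall x, exists l, derivable_pt_lim (fun x => - x) x l).
  { intro x. eexists. apply (derivable_pt_lim_opp id). apply derivable_pt_lim_id. }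
  assert (D4 : forall x, exists l, derivable_pt_lim (fun x => x / 4) x l).
  { intro x. eexists. apply (derivable_pt_lim_div_scal id). apply derivable_pt_lim_id. }
  assert (C1 := cont3_comp (fun x => - x) _ Hg (fun q => Dopp _)).
  assert (C2 := cont3_plus _ _ Hf C1).
  assert (C3 := cont3_comp (fun x => x * x) _ C2 (fun q => Dsq _)).
  assert (C4 := cont3_comp (fun x => - x) _ C3 (fun q => Dopp _)).
  assert (C5 := cont3_plus _ _ Hf Hg).
  assert (C6 := cont3_comp (fun x => x * x) _ C5 (fun q => Dsq _)).
  assert (C7 := cont3_plus _ _ C6 C4).
  assert (C8 := cont3_comp (fun x => x / 4) _ C7 (fun q => D4 _)).
  intros p eps He. destruct (C8 p eps He) as [d [Hd H]]. exists d. split; auto.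
  intros q Hq. specialize (H q Hq). simpl in H.
  replace (f q * g q - f p * g p) with
   (((f q + g q) * (f q + g q) + - ((f q + - g q) * (f q + - g q))) / 4 -
    ((f p + g p) * (f p + g p) + - ((f p + - g p) * (f p + - g p))) / 4) by field.
  exact H.
Qed.

Definition smu (n : nat) (f : pt -> R) :=
  forall l : list idx, (length l <= n)%nat -> cont3 (ipd l f) /\ dable (ipd l f).

Lemma smu_0 f : cont3 f -> dable f -> smu 0 f.
Proof. intros Hc Hd l Hl. destruct l; simpl in Hl; [|lia]. split; assumption. Qed.

Lemma smu_base n f : smu n f -> cont3 f /\ dable f.
Proof. intro H. apply (H nil). simpl; lia. Qed.

Lemma smu_S n f : cont3 f -> dable f -> (forall a, smu n (pd f a)) -> smu (S n) f.
Proof.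
  intros Hc Hd Hp l Hl. destruct l as [|a l]; [split; assumption|].
  simpl. apply (Hp a). simpl in Hl; lia.
Qed.

Lemma smu_pd n f a : smu (S n) f -> smu n (pd f a).
Proof. intros H l Hl. apply (H (a :: l)). simpl; lia. Qed.

Lemma smu_le m n f : (m <= n)%nat -> smu n f -> smu m f.
Proof. intros Hmn H l Hl. apply H. lia. Qed.

Lemma smooth_smu f : smooth f <-> forall n, smu n f.
Proof.
  split.
  - intros H n l _. destruct (H l) as [H1 H2]. split; [exact H1|]. exact H2.
  - intros H l. destruct (H (length l) l (le_n _)) as [H1 H2]. split; [exact H1|]. exact H2.
Qed.

Lemma smu_const n c : smu n (fun _ => c).
Proof.
  revert c; induction n; intro c.
  - apply smu_0; [apply cont3_const|apply dable_const].
  - apply smu_S; [apply cont3_const|apply dable_const|].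
    intro a. rewrite pd_const. apply IHn.
Qed.

Lemma smu_plus n : forall f g, smu n f -> smu n g -> smu n (fun q => f q + g q).
Proof.
  induction n; intros f g Hf Hg;
  destruct (smu_base _ _ Hf) as [Cf Df]; destruct (smu_base _ _ Hg) as [Cg Dg].
  - apply smu_0; [apply cont3_plus|apply dable_plus]; assumption.
  - apply smu_S; [apply cont3_plus|apply dable_plus|]; try assumption.
    intro a. rewrite pd_plus by assumption. apply IHn; apply smu_pd; assumption.
Qed.

Lemma smu_mult n : forall f g, smu n f -> smu n g -> smu n (fun q => f q * g q).
Proof.
  induction n; intros f g Hf Hg;
  destruct (smu_base _ _ Hf) as [Cf Df]; destruct (smu_base _ _ Hg) as [Cg Dg].
  - apply smu_0; [apply cont3_mult|apply dable_mult]; assumption.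
  - apply smu_S; [apply cont3_mult|apply dable_mult|]; try assumption.
    intro a. rewrite pd_mult by assumption. apply smu_plus; apply IHn;
    try (apply smu_pd; assumption); apply (smu_le n (S n)); auto.
Qed.

Lemma smu_exp n : forall f, smu n f -> smu n (fun q => exp (f q)).
Proof.
  assert (Dx : forall x, exists l, derivable_pt_lim exp x l) by (intro x; eexists; apply derivable_pt_lim_exp).
  induction n; intros f Hf; destruct (smu_base _ _ Hf) as [Cf Df].
  - apply smu_0; [apply cont3_comp|apply dable_comp]; auto.
  - apply smu_S; [apply cont3_comp|apply dable_comp|]; auto.
    intro a. rewrite (pd_comp exp exp) by (auto; intro; apply derivable_pt_lim_exp).
    apply smu_mult; [apply IHn; apply (smu_le n (S n)); auto| apply smu_pd; auto].
Qed.

Lemma smu_inv n : forall f, (forall q, f q <> 0) -> smu n f -> smu n (fun q => / f q).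
Proof.
  intros f Hnz.
  assert (Dx : forall q, exists l, derivable_pt_lim Rinv (f q) l) by (intro q; eexists; apply deriv_inv; auto).
  induction n; intros Hf; destruct (smu_base _ _ Hf) as [Cf Df].
  - apply smu_0; [apply cont3_comp|apply dable_comp]; auto.
  - apply smu_S; [apply cont3_comp|apply dable_comp|]; auto.
    intro a. rewrite (pd_comp Rinv (fun x => - (/ x * / x))) by (auto; intro; apply deriv_inv; auto).
    apply smu_mult; [|apply smu_pd; auto].
    assert (E : (fun q => (fun x => - (/ x * / x)) (f q)) = fun q => (fun _ => -1) q * ((fun q => / f q) q * (fun q => / f q) q)).
    { apply functional_extensionality; intro q. simpl. ring. }
    rewrite E. apply smu_mult; [apply smu_const|].
    assert (IH := IHn (smu_le n (S n) _ (le_S _ _ (le_n _)) Hf)).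
    apply smu_mult; exact IH.
Qed.

Lemma smu_ln n : forall f, (forall q, 0 < f q) -> smu n f -> smu n (fun q => ln (f q)).
Proof.
  intros f Hp Hf.
  assert (Dx : forall q, exists l, derivable_pt_lim ln (f q) l) by (intro q; eexists; apply derivable_pt_lim_ln; auto).
  destruct (smu_base _ _ Hf) as [Cf Df].
  destruct n.
  - apply smu_0; [apply cont3_comp|apply dable_comp]; auto.
  - apply smu_S; [apply cont3_comp|apply dable_comp|]; auto.
    intro a. rewrite (pd_comp ln Rinv) by (auto; intro; apply derivable_pt_lim_ln; auto).
    apply smu_mult; [|apply smu_pd; auto].
    apply smu_inv; [intro q; specialize (Hp q); lra|]. apply (smu_le n (S n)); auto.
Qed.

Lemma sm_const c : smooth (fun _ => c).
Proof. apply smooth_smu. intro; apply smu_const. Qed.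
Lemma sm_plus f g : smooth f -> smooth g -> smooth (fun q => f q + g q).
Proof. rewrite !smooth_smu. intros; apply smu_plus; auto. Qed.
Lemma sm_mult f g : smooth f -> smooth g -> smooth (fun q => f q * g q).
Proof. rewrite !smooth_smu. intros; apply smu_mult; auto. Qed.
Lemma sm_minus f g : smooth f -> smooth g -> smooth (fun q => f q - g q).
Proof.
  intros Hf Hg. 
  assert (E : (fun q => f q - g q) = fun q => f q + (fun _ => -1) q * g q)
    by (apply functional_extensionality; intro; ring).
  rewrite E. apply sm_plus; auto. apply sm_mult; auto. apply sm_const.
Qed.
Lemma sm_opp f : smooth f -> smooth (fun q => - f q).
Proof.
  intros Hf. 
  assert (E : (fun q => - f q) = fun q => (fun _ => -1) q * f q)
    by (apply functional_extensionality; intro; ring).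
  rewrite E. apply sm_mult; auto. apply sm_const.
Qed.
Lemma sm_exp f : smooth f -> smooth (fun q => exp (f q)).
Proof. rewrite !smooth_smu. intros; apply smu_exp; auto. Qed.
Lemma sm_inv f : (forall q, f q <> 0) -> smooth f -> smooth (fun q => / f q).
Proof. rewrite !smooth_smu. intros; apply smu_inv; auto. Qed.
Lemma sm_div f g : (forall q, g q <> 0) -> smooth f -> smooth g -> smooth (fun q => f q / g q).
Proof. intros. unfold Rdiv. apply sm_mult; auto. apply sm_inv; auto. Qed.
Lemma sm_ln f : (forall q, 0 < f q) -> smooth f -> smooth (fun q => ln (f q)).
Proof. rewrite !smooth_smu. intros; apply smu_ln; auto. Qed.
Lemma sm_pd f a : smooth f -> smooth (pd f a).
Proof. intros H l. exact (H (a :: l)). Qed.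
Lemma sm_dable f : smooth f -> dable f.
Proof. intro H. exact (proj2 (H nil)). Qed.
Lemma sm_cont f : smooth f -> cont3 f.
Proof. intro H. exact (proj1 (H nil)). Qed.

Ltac sm := repeat (first [ apply sm_const | apply sm_plus | apply sm_minus | apply sm_mult
  | apply sm_opp | apply sm_exp | apply sm_pd | assumption ]).

Lemma vapp_plus X u v p : smooth u -> smooth v ->
  vapp X (fun q => u q + v q) p = vapp X u p + vapp X v p.
Proof. intros Hu Hv. unfold vapp, sum3. rewrite !pd_plus by (apply sm_dable; auto). unfold sum3; ring. Qed.
Lemma vapp_mult X u v p : smooth u -> smooth v ->
  vapp X (fun q => u q * v q) p = vapp X u p * v p + u p * vapp X v p.
Proof. intros Hu Hv. unfold vapp, sum3. rewrite !pd_mult by (apply sm_dable; auto). unfold sum3; ring. Qed.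
Lemma vapp_const X c p : vapp X (fun _ => c) p = 0.
Proof. unfold vapp, sum3. rewrite !pd_const. unfold sum3; ring. Qed.
Lemma vapp_exp X u p : smooth u -> vapp X (fun q => exp (u q)) p = exp (u p) * vapp X u p.
Proof.
  intros Hu. unfold vapp, sum3. rewrite !(pd_comp exp exp) by (try apply sm_dable; auto; intro; apply derivable_pt_lim_exp).
  unfold sum3; ring.
Qed.
Lemma vapp_ln X u p : (forall q, 0 < u q) -> smooth u -> vapp X (fun q => ln (u q)) p = / u p * vapp X u p.
Proof.
  intros Hp Hu. unfold vapp, sum3. rewrite !(pd_comp ln Rinv) by (try apply sm_dable; auto; intro; apply derivable_pt_lim_ln; auto).
  unfold sum3; ring.
Qed.
Lemma vapp_scale (F : pt -> R) (X : VF) h p : vapp (fun a q => F q * X a q) h p = F p * vapp X h p.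
Proof. unfold vapp, sum3; ring. Qed.
Lemma vapp_zero X h p : (forall q, h q = 0) -> vapp X h p = 0.
Proof.
  intro H. replace h with (fun _ : pt => 0) by (apply functional_extensionality; intro; auto).
  apply vapp_const.
Qed.

Lemma bracket_scale (F G : pt -> R) (X Y : VF) a p :
  smooth F -> smooth G -> (forall b, smooth (X b)) -> (forall b, smooth (Y b)) ->
  bracket (fun b q => F q * X b q) (fun b q => G q * Y b q) a p =
  F p * G p * bracket X Y a p + F p * vapp X G p * Y a p - G p * vapp Y F p * X a p.
Proof.
  intros HF HG HX HY. unfold bracket.
  rewrite !vapp_scale. rewrite !vapp_mult by auto. ring.
Qed.

Definition det3 (r : idx -> idx -> R) :=
  r I1 I1 * (r I2 I2 * r I3 I3 - r I2 I3 * r I3 I2)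
  - r I1 I2 * (r I2 I1 * r I3 I3 - r I2 I3 * r I3 I1)
  + r I1 I3 * (r I2 I1 * r I3 I2 - r I2 I2 * r I3 I1).

Definition rowrep (r : idx -> idx -> R) (b : idx -> R) : idx -> idx -> R :=
  fun i a => match i with I1 => b a | _ => r i a end.

Lemma cramer (r : idx -> idx -> R) (b c : idx -> R) :
  (forall a, b a = sum3 (fun i => c i * r i a)) -> c I1 * det3 r = det3 (rowrep r b).
Proof.
  intro H. unfold det3, rowrep. rewrite !H. unfold sum3. ring.
Qed.

Definition lin_indep (r : idx -> idx -> R) :=
  forall l : idx -> R, (forall a, sum3 (fun i => l i * r i a) = 0) -> forall i, l i = 0.

Definition vec3 (x y z : R) : idx -> R := fun i => match i with I1 => x | I2 => y | I3 => z end.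

Lemma det3_nz r : lin_indep r -> det3 r <> 0.
Proof.
  intros H Hd. unfold det3 in Hd.
  set (x1 := r I1 I1) in *. set (x2 := r I1 I2) in *. set (x3 := r I1 I3) in *.
  set (y1 := r I2 I1) in *. set (y2 := r I2 I2) in *. set (y3 := r I2 I3) in *.
  set (z1 := r I3 I1) in *. set (z2 := r I3 I2) in *. set (z3 := r I3 I3) in *.
  assert (C1 := H (vec3 (y2*z3 - y3*z2) (-(x2*z3 - x3*z2)) (x2*y3 - x3*y2))).
  assert (C2 := H (vec3 (-(y1*z3 - y3*z1)) (x1*z3 - x3*z1) (-(x1*y3 - x3*y1)))).
  assert (C3 := H (vec3 (y1*z2 - y2*z1) (-(x1*z2 - x2*z1)) (x1*y2 - x2*y1))).
  assert (P1 : forall i, vec3 (y2*z3 - y3*z2) (-(x2*z3 - x3*z2)) (x2*y3 - x3*y2) i = 0).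
  { apply C1. intro a; destruct a; unfold sum3, vec3; fold x1 x2 x3 y1 y2 y3 z1 z2 z3; lra. }
  assert (P2 : forall i, vec3 (-(y1*z3 - y3*z1)) (x1*z3 - x3*z1) (-(x1*y3 - x3*y1)) i = 0).
  { apply C2. intro a; destruct a; unfold sum3, vec3; fold x1 x2 x3 y1 y2 y3 z1 z2 z3; lra. }
  assert (P3 : forall i, vec3 (y1*z2 - y2*z1) (-(x1*z2 - x2*z1)) (x1*y2 - x2*y1) i = 0).
  { apply C3. intro a; destruct a; unfold sum3, vec3; fold x1 x2 x3 y1 y2 y3 z1 z2 z3; lra. }
  assert (a1 := P1 I1); assert (a2 := P1 I2); assert (a3 := P1 I3).
  assert (b1 := P2 I1); assert (b2 := P2 I2); assert (b3 := P2 I3).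
  assert (c1 := P3 I1); assert (c2 := P3 I2); assert (c3 := P3 I3).
  simpl in *.
  assert (Q1 := H (vec3 y1 (-x1) 0)).
  assert (Q2 := H (vec3 y2 (-x2) 0)).
  assert (Q3 := H (vec3 y3 (-x3) 0)).
  assert (R1 : x1 = 0).
  { assert (E : -x1 = 0). { refine (Q1 _ I2). intro a; destruct a; unfold sum3, vec3; fold x1 x2 x3 y1 y2 y3 z1 z2 z3; lra. } lra. }
  assert (R2 : x2 = 0).
  { assert (E : -x2 = 0). { refine (Q2 _ I2). intro a; destruct a; unfold sum3, vec3; fold x1 x2 x3 y1 y2 y3 z1 z2 z3; lra. } lra. }
  assert (R3 : x3 = 0).
  { assert (E : -x3 = 0). { refine (Q3 _ I2). intro a; destruct a; unfold sum3, vec3; fold x1 x2 x3 y1 y2 y3 z1 z2 z3; lra. } lra. }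
  assert (E : 1 = 0).
  { refine (H (vec3 1 0 0) _ I1). intro a; destruct a; unfold sum3, vec3; fold x1 x2 x3 y1 y2 y3 z1 z2 z3; lra. }
  lra.
Qed.

Lemma struct_unique D c1 c2 : frame D -> structure_fns D c1 -> structure_fns D c2 ->
  forall i j k p, c1 i j k p = c2 i j k p.
Proof.
  intros [_ HF] H1 H2 i j k p.
  assert (E := HF p (fun i => c1 i j k p - c2 i j k p)).
  apply Rminus_diag_uniq. apply E.
  intro a. specialize (H1 j k a p). specialize (H2 j k a p).
  unfold sum3 in *. lra.
Qed.

Lemma struct_c_eq D c p : frame D -> structure_fns D c ->
  c I1 I2 I3 p = det3 (rowrep (fun i a => D i a p) (fun a => bracket (D I2) (D I3) a p))
                 / det3 (fun i a => D i a p).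
Proof.
  intros [HS HF] Hc.
  assert (Hn : det3 (fun i a => D i a p) <> 0) by (apply det3_nz; intros l Hl; apply (HF p l Hl)).
  rewrite <- (cramer (fun i a => D i a p) (fun a => bracket (D I2) (D I3) a p) (fun i => c i I2 I3 p)).
  - field. exact Hn.
  - intro a. apply Hc.
Qed.

Lemma struct_smooth D c : frame D -> structure_fns D c -> smooth (c I1 I2 I3).
Proof.
  intros HD Hc.
  assert (E : c I1 I2 I3 = fun p => det3 (rowrep (fun i a => D i a p) (fun a => bracket (D I2) (D I3) a p))
                 / det3 (fun i a => D i a p)).
  { apply functional_extensionality; intro p. apply struct_c_eq; auto. }
  rewrite E. destruct HD as [HS HF].
  apply sm_div.
  - intro p. apply det3_nz. intros l Hl. apply (HF p l Hl).
  - cbv beta iota delta [det3 rowrep bracket vapp sum3].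
    repeat (first [ apply sm_const | apply sm_plus | apply sm_minus | apply sm_mult
      | apply sm_opp | apply sm_pd | apply HS ]).
  - cbv beta iota delta [det3].
    repeat (first [ apply sm_const | apply sm_plus | apply sm_minus | apply sm_mult
      | apply sm_opp | apply sm_pd | apply HS ]).
Qed.

Definition lin (p q : pt) (t : R) : pt :=
  match p, q with (x1, y1, z1), (x2, y2, z2) =>
    (x1 + t * (x2 - x1), y1 + t * (y2 - y1), z1 + t * (z2 - z1)) end.

Lemma lin_0 p q : lin p q 0 = p.
Proof. destruct p as [[x y] z]; destruct q as [[a b] c]; simpl. f_equal; [f_equal|]; ring. Qed.
Lemma lin_1 p q : lin p q 1 = q.
Proof. destruct p as [[x y] z]; destruct q as [[a b] c]; simpl. f_equal; [f_equal|]; ring. Qed.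

Lemma coord_lin p q t t' a : coord (lin p q t') a - coord (lin p q t) a = (t' - t) * (coord q a - coord p a).
Proof. destruct p as [[x y] z]; destruct q as [[u v] w]; destruct a; simpl; ring. Qed.

Lemma cont_lin h p q : cont3 h -> continuity (fun t => h (lin p q t)).
Proof.
  intros Hh t eps He. simpl. unfold R_dist.
  destruct (Hh (lin p q t) eps He) as [d [Hd H]].
  set (M := 1 + Rabs (coord q I1 - coord p I1) + Rabs (coord q I2 - coord p I2) + Rabs (coord q I3 - coord p I3)).
  assert (HM : 1 <= M).
  { unfold M. assert (H1:=Rabs_pos (coord q I1 - coord p I1)). assert (H2:=Rabs_pos (coord q I2 - coord p I2)).
    assert (H3:=Rabs_pos (coord q I3 - coord p I3)). lra. }
  exists (d / M). split.
  - apply Rdiv_lt_0_compat; lra.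
  - intros t' [_ Ht']. apply H. intro a. rewrite coord_lin, Rabs_mult.
    assert (Ha : Rabs (coord q a - coord p a) <= M).
    { unfold M. assert (H1:=Rabs_pos (coord q I1 - coord p I1)). assert (H2:=Rabs_pos (coord q I2 - coord p I2)).
      assert (H3:=Rabs_pos (coord q I3 - coord p I3)). destruct a; lra. }
    assert (Hp := Rabs_pos (t' - t)).
    apply Rle_lt_trans with (Rabs (t' - t) * M).
    + apply Rmult_le_compat_l; auto.
    + apply Rmult_lt_reg_r with (/ M). apply Rinv_0_lt_compat; lra.
      rewrite Rmult_assoc, Rinv_r by lra. rewrite Rmult_1_r. exact Ht'.
Qed.

Lemma no_sign_change h p q : cont3 h -> (forall x, h x <> 0) -> h p > 0 -> h q < 0 -> False.
Proof.
  intros Hc Hn Hp Hq.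
  destruct (IVT (fun t => h (lin q p t)) 0 1 (cont_lin h q p Hc) Rlt_0_1) as [z [_ Hz]].
  - rewrite lin_0. exact Hq.
  - rewrite lin_1. exact Hp.
  - exact (Hn _ Hz).
Qed.

Lemma sign_const h : cont3 h -> (forall x, h x <> 0) -> (forall p, h p > 0) \/ (forall p, h p < 0).
Proof.
  intros Hc Hn. set (p0 := (0, 0, 0) : pt).
  destruct (Rtotal_order (h p0) 0) as [H|[H|H]].
  - right. intro p. destruct (Rtotal_order (h p) 0) as [H'|[H'|H']]; auto.
    + exfalso; exact (Hn _ H').
    + exfalso; exact (no_sign_change h p p0 Hc Hn H' H).
  - exfalso; exact (Hn _ H).
  - left. intro p. destruct (Rtotal_order (h p) 0) as [H'|[H'|H']]; auto.
    + exfalso; exact (no_sign_change h p0 p Hc Hn H H').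
    + exfalso; exact (Hn _ H').
Qed.

Definition fsc (A B : pt -> R) (s : R) (g : idx -> pt -> R) (i : idx) (p : pt) : R :=
  s * A p * rpow (B p) (g (next i) p + g (next (next i)) p).

Definition ieq (i j : idx) : bool :=
  match i, j with I1, I1 | I2, I2 | I3, I3 => true | _, _ => false end.

Definition cp A B s g (D : idx -> VF) (c : idx -> idx -> idx -> pt -> R) i j k p :=
  fsc A B s g j p * fsc A B s g k p * c i j k p / fsc A B s g i p
  + (if ieq i k then fsc A B s g j p * vapp (D j) (fsc A B s g k) p / fsc A B s g k p else 0)
  - (if ieq i j then fsc A B s g k p * vapp (D k) (fsc A B s g j) p / fsc A B s g j p else 0).

Section T.
Variables (A B : pt -> R) (s : R) (g : idx -> pt -> R) (D : idx -> VF).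
Hypothesis HA : smooth A.
Hypothesis HB : smooth B.
Hypothesis HAB : forall p, A p > 0 /\ B p > 0.
Hypothesis Hs : s <> 0.
Hypothesis Hg : forall i, smooth (g i).
Hypothesis HD : frame D.

Lemma Bpos p : 0 < B p. Proof. apply HAB. Qed.

Lemma fsc_smooth i : smooth (fsc A B s g i).
Proof.
  unfold fsc, rpow.
  apply sm_mult; [apply sm_mult; [apply sm_const|auto]|].
  apply sm_exp. apply sm_mult; [apply sm_plus; auto|].
  apply sm_ln; [apply Bpos|auto].
Qed.

Lemma fsc_nz i p : fsc A B s g i p <> 0.
Proof.
  unfold fsc, rpow. assert (H1 := proj1 (HAB p)).
  assert (H2 := exp_pos ((g (next i) p + g (next (next i)) p) * ln (B p))).
  apply Rmult_integral_contrapositive_currified; [|lra].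
  apply Rmult_integral_contrapositive_currified; lra.
Qed.

Lemma vapp_fsc X i p : vapp X (fsc A B s g i) p = fsc A B s g i p *
  (vapp X A p / A p + (vapp X (g (next i)) p + vapp X (g (next (next i))) p) * ln (B p)
   + (g (next i) p + g (next (next i)) p) * (vapp X B p / B p)).
Proof.
  unfold fsc, rpow.
  assert (HB' := Bpos).
  rewrite vapp_mult; [| apply sm_mult; [apply sm_const|auto] |].
  2:{ apply sm_exp. apply sm_mult; [apply sm_plus; auto|]. apply sm_ln; auto. }
  rewrite vapp_mult by (try apply sm_const; auto).
  rewrite vapp_const.
  rewrite vapp_exp by (apply sm_mult; [apply sm_plus; auto|]; apply sm_ln; auto).
  rewrite vapp_mult by (try apply sm_plus; auto; apply sm_ln; auto).
  rewrite vapp_plus by auto.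
  rewrite vapp_ln by auto.
  assert (H1 := proj1 (HAB p)). assert (H2 := HB' p).
  field. lra.
Qed.

Lemma tr_frame : frame (tr_D A B s g D).
Proof.
  destruct HD as [HS HF]. split.
  - intros i a. change (smooth (fun p => fsc A B s g i p * D i a p)).
    apply sm_mult; [apply fsc_smooth|auto].
  - intros p l Hl i.
    assert (E := HF p (fun i => l i * fsc A B s g i p)).
    assert (E2 : l i * fsc A B s g i p = 0).
    { apply E. intro a. rewrite <- (Hl a). unfold sum3, tr_D, fsc. ring. }
    apply Rmult_integral in E2. destruct E2 as [E2|E2]; auto.
    exfalso; exact (fsc_nz i p E2).
Qed.

Lemma tr_struct c : structure_fns D c -> structure_fns (tr_D A B s g D) (cp A B s g D c).
Proof.
  intros Hc j k a p. destruct HD as [HS HF].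
  change (bracket (fun b q => fsc A B s g j q * D j b q) (fun b q => fsc A B s g k q * D k b q) a p
     = sum3 (fun i => cp A B s g D c i j k p * (fsc A B s g i p * D i a p))).
  rewrite bracket_scale; try apply fsc_smooth; auto.
  rewrite (Hc j k a p).
  assert (N1 := fsc_nz I1 p). assert (N2 := fsc_nz I2 p). assert (N3 := fsc_nz I3 p).
  unfold cp, sum3.
  destruct j; destruct k; simpl ieq; cbv iota; field; auto.
Qed.

End T.

Lemma next3 i : next (next (next i)) = i. Proof. destruct i; reflexivity. Qed.
Lemma ieq_refl i : ieq i i = true. Proof. destruct i; reflexivity. Qed.
Lemma ieq_n1 i : ieq (next i) i = false. Proof. destruct i; reflexivity. Qed.
Lemma ieq_n2 i : ieq (next (next i)) i = false. Proof. destruct i; reflexivity. Qed.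

Lemma vapp_trD A B s g D i h p : vapp (tr_D A B s g D i) h p = fsc A B s g i p * vapp (D i) h p.
Proof. unfold vapp, tr_D, fsc, sum3. ring. Qed.

Definition E2 (g : idx -> pt -> R) (D : idx -> VF) xi c :=
  forall i p, let j := next i in let k := next (next i) in
      0 = vapp (D i) (fun q => g j q + g k q) p
          + c j i j p * (g i p - g j p)
          + c k i k p * (g i p - g k p)
          - 2 * vapp (D i) xi p * g i p.

Section T.
Variables (A B : pt -> R) (s : R) (g : idx -> pt -> R) (D : idx -> VF) (xi : pt -> R).
Hypothesis HA : smooth A.
Hypothesis HB : smooth B.
Hypothesis HAB : forall p, A p > 0 /\ B p > 0.
Hypothesis Hs : s <> 0.
Hypothesis Hg : forall i, smooth (g i).
Hypothesis HD : frame D.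
Hypothesis Hxi : smooth xi.
Hypothesis HE1 : forall p, 0 = g I2 p * g I3 p + g I3 p * g I1 p + g I1 p * g I2 p.
Hypothesis Hnz : forall i p, g i p <> 0 /\ g (next i) p + g (next (next i)) p <> 0.

Lemma tr_E2 c : E2 g D xi c -> E2 (tr_g A g) (tr_D A B s g D) (tr_xi A B g xi) (cp A B s g D c).
Proof.
  intros H i p. specialize (H i p). cbv zeta in *.
  assert (HE1' : 0 = g i p * g (next i) p + g (next i) p * g (next (next i)) p + g (next (next i)) p * g i p).
  { specialize (HE1 p). destruct i; simpl; lra. }
  assert (DE1 : vapp (D i) (fun q => g I2 q * g I3 q + g I3 q * g I1 q + g I1 q * g I2 q) p = 0).
  { apply vapp_zero. intro q. rewrite <- HE1. reflexivity. }
  rewrite !vapp_plus in DE1 by (repeat apply sm_plus; repeat apply sm_mult; auto).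
  rewrite !vapp_mult in DE1 by auto.
  assert (DE1' : 0 = vapp (D i) (g i) p * (g (next i) p + g (next (next i)) p)
                   + vapp (D i) (g (next i)) p * (g (next (next i)) p + g i p)
                   + vapp (D i) (g (next (next i))) p * (g i p + g (next i) p)).
  { destruct i; simpl in *; lra. }
  clear DE1.
  assert (HBp : forall q, 0 < B q) by (intro q; apply HAB).
  assert (HAp : forall q, 0 < A q) by (intro q; apply HAB).
  unfold cp. rewrite !ieq_refl, ieq_n1, ieq_n2.
  rewrite !vapp_trD. try rewrite !next3.
  unfold tr_g, tr_xi.
  rewrite !vapp_plus in H by auto.
  rewrite !vapp_plus by (repeat first [apply sm_plus | apply sm_mult | apply sm_ln | assumption | auto]).
  rewrite !vapp_mult by (repeat first [apply sm_plus | apply sm_mult | apply sm_ln | assumption | auto]).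
  rewrite !vapp_plus by (repeat first [apply sm_plus | apply sm_mult | apply sm_ln | assumption | auto]).
  rewrite !vapp_ln by auto.
  rewrite !vapp_fsc by auto.
  try rewrite !next3.
  replace (g I1 p + g I2 p + g I3 p) with (g i p + g (next i) p + g (next (next i)) p) by (destruct i; simpl; ring).
  replace (vapp (D i) (g I1) p + vapp (D i) (g I2) p + vapp (D i) (g I3) p) with
    (vapp (D i) (g i) p + vapp (D i) (g (next i)) p + vapp (D i) (g (next (next i))) p) by (destruct i; simpl; ring).
  destruct (Hnz i p) as [Ni Njk].
  assert (Nj : g (next i) p <> 0) by apply (Hnz (next i) p).
  assert (Nk : g (next (next i)) p <> 0) by apply (Hnz (next (next i)) p).
  assert (NA : A p <> 0) by (specialize (HAp p); lra).
  assert (NB : B p <> 0) by (specialize (HBp p); lra).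
  assert (Fi := fsc_nz A B s g HAB Hs i p).
  assert (Fj := fsc_nz A B s g HAB Hs (next i) p).
  assert (Fk := fsc_nz A B s g HAB Hs (next (next i)) p).
  set (fi := fsc A B s g i p) in *. set (fj := fsc A B s g (next i) p) in *.
  set (fk := fsc A B s g (next (next i)) p) in *.
  set (gi := g i p) in *. set (gj := g (next i) p) in *. set (gk := g (next (next i)) p) in *.
  set (Dgi := vapp (D i) (g i) p) in *. set (Dgj := vapp (D i) (g (next i)) p) in *.
  set (Dgk := vapp (D i) (g (next (next i))) p) in *.
  set (Dxi := vapp (D i) xi p) in *. set (DA := vapp (D i) A p) in *. set (DB := vapp (D i) B p) in *.
  set (cj := c (next i) i (next i) p) in *. set (ck := c (next (next i)) i (next (next i)) p) in *.
  set (L := ln (B p)) in *. set (Ap := A p) in *. set (Bp := B p) in *.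
  clearbody fi fj fk gi gj gk Dgi Dgj Dgk Dxi DA DB cj ck L Ap Bp.
  assert (Hx : Dxi * (2 * gi) = Dgj + Dgk + cj * (gi - gj) + ck * (gi - gk)) by lra.
  replace Dxi with ((Dgj + Dgk + cj * (gi - gj) + ck * (gi - gk)) / (2 * gi))
    by (rewrite <- Hx; field; auto).
  assert (Hd : Dgi * (gj + gk) = - (Dgj * (gk + gi) + Dgk * (gi + gj))) by lra.
  replace Dgi with (- (Dgj * (gk + gi) + Dgk * (gi + gj)) / (gj + gk))
    by (rewrite <- Hd; field; auto).
  assert (He : gi * (gj + gk) = - (gj * gk)) by lra.
  assert (Ngjk : gj * gk <> 0) by (apply Rmult_integral_contrapositive_currified; auto).
  replace gi with (- (gj * gk) / (gj + gk)) by (rewrite <- He; field; auto).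
  field. repeat split; auto.
Qed.
End T.

Lemma cp_123 A B s g D c p : s * s = 1 -> A p > 0 ->
  cp A B s g D c I1 I2 I3 p = s * A p * exp (2 * g I1 p * ln (B p)) * c I1 I2 I3 p.
Proof.
  intros Hs HA. unfold cp, fsc, rpow. simpl ieq. cbv iota. simpl next.
  assert (K : exp ((g I3 p + g I1 p) * ln (B p)) * exp ((g I1 p + g I2 p) * ln (B p))
            = exp (2 * g I1 p * ln (B p)) * exp ((g I2 p + g I3 p) * ln (B p))).
  { rewrite <- !exp_plus. f_equal. ring. }
  assert (E1 := exp_pos ((g I2 p + g I3 p) * ln (B p))).
  assert (Hs0 : s <> 0) by (intro; subst; lra).
  transitivity (s * s * A p * A p * (exp ((g I3 p + g I1 p) * ln (B p)) * exp ((g I1 p + g I2 p) * ln (B p))) * c I1 I2 I3 p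
      / (s * A p * exp ((g I2 p + g I3 p) * ln (B p)))).
  - unfold Rdiv; ring.
  - rewrite K. field. repeat split; lra.
Qed.

Lemma sign_choice (h : pt -> R) : (forall p, h p > 0) \/ (forall p, h p < 0) ->
  exists s, (s = 1 \/ s = -1) /\ (forall p, s * h p < 0) /\
    forall s', (s' = 1 \/ s' = -1) -> forall p, s' * h p < 0 -> s' = s.
Proof.
  intros [H|H].
  - exists (-1). split; [right; reflexivity|]. split.
    + intro p. specialize (H p). lra.
    + intros s' [E|E] p Hp; subst; auto. specialize (H p). lra.
  - exists 1. split; [left; reflexivity|]. split.
    + intro p. specialize (H p). lra.
    + intros s' [E|E] p Hp; subst; auto. specialize (H p). lra.
Qed.

Theorem lemma6p8 (g : idx -> pt -> R) (D : idx -> VF) (xi : pt -> R) :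
  MC_pre g D xi ->
  (forall p, g I1 p > 0 /\ g I2 p < 0 /\ g I3 p < 0) ->
  (forall c, structure_fns D c -> forall p, c I1 I2 I3 p <> 0) ->
  exists (A B : pt -> R) (s : R),
    (smooth A /\ smooth B /\ (forall p, A p > 0 /\ B p > 0) /\ (s = 1 \/ s = -1) /\
     MC_normal (tr_g A g) (tr_D A B s g D) (tr_xi A B g xi)) /\
    forall (A' B' : pt -> R) (s' : R),
      smooth A' -> smooth B' -> (forall p, A' p > 0 /\ B' p > 0) -> (s' = 1 \/ s' = -1) ->
      MC_normal (tr_g A' g) (tr_D A' B' s' g D) (tr_xi A' B' g xi) ->
      A' = A /\ B' = B /\ s' = s.
Proof.
  intros [HD [Hg [Hxi [HE1 [c [Hc HE2]]]]]] Hsg Hc0.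
  assert (Hc0' := Hc0 c Hc).
  assert (Hcs : smooth (c I1 I2 I3)) by (apply (struct_smooth D); auto).
  destruct (sign_choice (c I1 I2 I3) (sign_const _ (sm_cont _ Hcs) Hc0')) as [s [Hs1 [Hsc Hsu]]].
  assert (Hss : s * s = 1) by (destruct Hs1; subst; ring).
  assert (Hs0 : s <> 0) by (destruct Hs1; subst; lra).
  assert (Hg1 : forall p, g I1 p <> 0) by (intro p; specialize (Hsg p); lra).
  assert (Psum : forall p, g I1 p + g I2 p < 0 /\ g I1 p + g I3 p < 0).
  { intro p. destruct (Hsg p) as [h1 [h2 h3]]. specialize (HE1 p). split.
    - destruct (Rlt_or_le (g I1 p + g I2 p) 0) as [h|h]; auto.
      assert (0 <= (g I1 p + g I2 p) * (-(g I2 p + g I3 p))) by (apply Rmult_le_pos; lra). nra.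
    - destruct (Rlt_or_le (g I1 p + g I3 p) 0) as [h|h]; auto.
      assert (0 <= (g I1 p + g I3 p) * (-(g I2 p + g I3 p))) by (apply Rmult_le_pos; lra). nra. }
  assert (Hnz : forall i p, g i p <> 0 /\ g (next i) p + g (next (next i)) p <> 0).
  { intros i p. destruct (Hsg p) as [h1 [h2 h3]]. destruct (Psum p) as [P12 P13].
    destruct i; simpl; split; lra. }
  set (A := fun p => / (2 * g I1 p)).
  assert (HA : smooth A).
  { apply sm_inv. intro q. specialize (Hg1 q). lra. apply sm_mult; [apply sm_const|auto]. }
  assert (HAp : forall p, A p > 0).
  { intro p. unfold A. apply Rinv_0_lt_compat. specialize (Hsg p). lra. }
  assert (HsAc : forall p, s * A p * c I1 I2 I3 p < 0).
  { intro p. specialize (Hsc p). specialize (HAp p).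
    replace (s * A p * c I1 I2 I3 p) with (A p * (s * c I1 I2 I3 p)) by ring. nra. }
  set (X := fun p => -2 / (s * A p * c I1 I2 I3 p)).
  assert (HXp : forall p, 0 < X p).
  { intro p. unfold X. specialize (HsAc p).
    assert (/ (s * A p * c I1 I2 I3 p) < 0) by (apply Rinv_lt_0_compat; auto).
    unfold Rdiv. nra. }
  assert (HX : smooth X).
  { apply sm_div. intro q; specialize (HsAc q); lra. apply sm_const.
    apply sm_mult; auto. apply sm_mult; auto. apply sm_const. }
  set (B := fun p => exp (ln (X p) / (2 * g I1 p))).
  assert (HB : smooth B).
  { apply sm_exp. apply sm_div. intro q; specialize (Hg1 q); lra.
    apply sm_ln; auto. apply sm_mult; [apply sm_const|auto]. }
  assert (HBp : forall p, B p > 0) by (intro p; apply exp_pos).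
  assert (HAB : forall p, A p > 0 /\ B p > 0) by (intro p; split; auto).
  assert (Key : forall p, exp (2 * g I1 p * ln (B p)) = X p).
  { intro p. unfold B at 1. rewrite ln_exp.
    replace (2 * g I1 p * (ln (X p) / (2 * g I1 p))) with (ln (X p)) by (field; auto).
    apply exp_ln; auto. }
  assert (Hcp : forall p, cp A B s g D c I1 I2 I3 p = -2).
  { intro p. rewrite cp_123 by auto. rewrite Key. unfold X.
    field. split; [apply (Hc0' p)|]. specialize (HAp p). split; lra. }
  assert (TF : frame (tr_D A B s g D)) by (apply tr_frame; auto).
  assert (TS : structure_fns (tr_D A B s g D) (cp A B s g D c)) by (apply tr_struct; auto).
  exists A. exists B. exists s. split.
  - split; [auto|]. split; [auto|]. split; [auto|]. split; [auto|].
    split; [|split].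
    + split; [exact TF|]. split.
      { intro i. unfold tr_g. apply sm_mult; auto. }
      split.
      { unfold tr_xi. apply sm_plus.
        - apply sm_plus; [auto|]. apply sm_ln; [intro q; apply HAp | auto].
        - apply sm_mult; [repeat apply sm_plus; auto|]. apply sm_ln; [intro q; apply HBp|auto]. }
      split.
      { intro p. unfold tr_g. specialize (HE1 p).
        transitivity (A p * A p * (g I2 p * g I3 p + g I3 p * g I1 p + g I1 p * g I2 p)).
        - rewrite <- HE1. ring.
        - ring. }
      exists (cp A B s g D c). split; [exact TS|].
      assert (T := tr_E2 A B s g D xi). unfold E2 in T. apply T; auto.
    + exists (fun p => - (g I2 p / g I1 p) - 1). split; [|split].
      * apply sm_minus; [|apply sm_const]. apply sm_opp. apply sm_div; auto.
      * intro p. destruct (Psum p) as [P12 _]. destruct (Hsg p) as [h1 _].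
        replace (- (g I2 p / g I1 p) - 1) with (- (g I1 p + g I2 p) * / g I1 p) by (field; auto).
        apply Rmult_lt_0_compat; [lra| apply Rinv_0_lt_compat; lra].
      * intro p. destruct (Psum p) as [P12 _]. specialize (Hg1 p). specialize (HE1 p).
        unfold tr_g, A. split; [|split].
        -- field; auto.
        -- field; auto.
        -- assert (H3 : g I3 p = - (g I1 p * g I2 p) / (g I1 p + g I2 p)).
           { assert (H3' : g I3 p * (g I1 p + g I2 p) = - (g I1 p * g I2 p)) by lra.
             rewrite <- H3'. field. lra. }
           rewrite H3.
           replace (- (g I2 p / g I1 p) - 1) with (- (g I1 p + g I2 p) / g I1 p) by (field; auto).
           field. split; [auto|lra].
    + intros c'' Hc'' p.
      rewrite (struct_unique _ c'' (cp A B s g D c) TF Hc'' TS). apply Hcp.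
  - intros A' B' s' HA' HB' HAB' Hs1' [Hpre' [[u' [_ [_ Hu']]] Hc']].
    assert (EA : A' = A).
    { apply functional_extensionality; intro p. destruct (Hu' p) as [h1 _].
      unfold tr_g in h1. unfold A. specialize (Hg1 p).
      replace (A' p) with (A' p * g I1 p / g I1 p) by (field; auto).
      rewrite h1. field. auto. }
    subst A'.
    assert (Hs' : s' * s' = 1) by (destruct Hs1'; subst; ring).
    assert (Hs0' : s' <> 0) by (destruct Hs1'; subst; lra).
    assert (TS' : structure_fns (tr_D A B' s' g D) (cp A B' s' g D c)) by (apply tr_struct; auto).
    assert (Hcv : forall p, cp A B' s' g D c I1 I2 I3 p = -2).
    { intro p. apply (Hc' _ TS'). }
    assert (Es : s' = s).
    { set (p0 := (0, 0, 0) : pt). apply (Hsu s' Hs1' p0).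
      specialize (Hcv p0). rewrite cp_123 in Hcv by auto.
      assert (K1 := HAp p0). assert (K2 := exp_pos (2 * g I1 p0 * ln (B' p0))).
      assert (K3 : 0 < A p0 * exp (2 * g I1 p0 * ln (B' p0))) by (apply Rmult_lt_0_compat; auto).
      destruct (Rlt_or_le (s' * c I1 I2 I3 p0) 0) as [h|h]; auto.
      exfalso. assert (0 <= s' * c I1 I2 I3 p0 * (A p0 * exp (2 * g I1 p0 * ln (B' p0)))) by (apply Rmult_le_pos; lra).
      assert (s' * c I1 I2 I3 p0 * (A p0 * exp (2 * g I1 p0 * ln (B' p0))) = -2) by (rewrite <- Hcv; ring).
      lra. }
    subst s'.
    split; [reflexivity|]. split; [|reflexivity].
    apply functional_extensionality; intro p.
    specialize (Hcv p). rewrite cp_123 in Hcv by auto.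
    assert (E1 : exp (2 * g I1 p * ln (B' p)) = exp (2 * g I1 p * ln (B p))).
    { rewrite Key. unfold X. specialize (HsAc p).
      rewrite <- Hcv. field. split; [apply (Hc0' p)|].
      specialize (HAp p). split; lra. }
    apply exp_inv in E1.
    assert (E2 : ln (B' p) = ln (B p)).
    { specialize (Hg1 p). apply (Rmult_eq_reg_l (2 * g I1 p)); [exact E1|lra]. }
    rewrite <- (exp_ln (B' p)) by (apply HAB').
    rewrite <- (exp_ln (B p)) by (apply HBp).
    rewrite E2. reflexivity.
Qed.
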